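(* Let $\bm A=(A_1,\dots,A_d)$ be Hermitian matrices in $M_n(\mathbb{C})$, $B\in M_n(\mathbb{C})$, and $(\bm\lambda,\nu)\in\mathbb{R}^d\times\mathbb{C}$. Suppose $(\bm\lambda,\nu)\in\dot\Lambda^{C}_{\epsilon_1}(\bm A,B)$ for some $\epsilon_1\ge0$, and that $$\sum_{i\neq k}\|[A_i,A_k]\|+\|F_{(\bm\lambda,\nu)}(\bm A,B)\|\le\epsilon_2$$ for some $\epsilon_2\ge0$. Then there is a unit vector $\bm\psi\in\mathbb{C}^n$ such that either $$\sqrt{\sum_{i=1}^d\|A_i\bm\psi-\lambda_i\bm\psi\|^2+\|B\bm\psi-\nu\bm\psi\|^2}\le\sqrt{2m}\,\sqrt{\epsilon_1^2+\epsilon_2}$$ or $$\sqrt{\sum_{i=1}^d\|A_i\bm\psi-\lambda_i\bm\psi\|^2+\|B^\dagger\bm\psi-\overline{\nu}\bm\psi\|^2}\le\sqrt{2m}\,\sqrt{\epsilon_1^2+\epsilon_2}.$$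
   Context: Let $n,d,m$ be positive integers. Fix Hermitian matrices $\Gamma_1,\dots,\Gamma_d\in M_{2m}(\mathbb{C})$ with $\Gamma_i^2=I_{2m}$ and $\Gamma_i\Gamma_j=-\Gamma_j\Gamma_i$ for $i\neq j$ (a Clifford representation; the paper uses a specific one built from Pauli matrices). Write $P=\begin{bmatrix} I_m&0\\0&0_m\end{bmatrix}$ and $Q=\begin{bmatrix}0_m&0\\0&I_m\end{bmatrix}$ in $M_{2m}(\mathbb{C})$. For a $d$-tuple $\bm A=(A_1,\dots,A_d)$ of Hermitian matrices in $M_n(\mathbb{C})$, a matrix $B\in M_n(\mathbb{C})$ (not necessarily Hermitian or normal), and a probe site $(\bm\lambda,\nu)\in\mathbb{R}^d\times\mathbb{C}$, the non-Hermitian spectral localizer is $$L_{(\bm\lambda,\nu)}(\bm A,B)=\sum_{i=1}^d (A_i-\lambda_i I)\otimes\Gamma_i+(B-\nu I)\otimes P-(B-\nu I)^\dagger\otimes Q\in M_{2mn}(\mathbb{C}).$$ The Clifford radial gap is $\dot\mu^{C}_{(\bm\lambda,\nu)}(\bm A,B)=\sigma_{\min}\big(L_{(\bm\lambda,\nu)}(\bm A,B)\big)$, and the Clifford radial $\epsilon$-pseudospectrum is $\dot\Lambda^{C}_\epsilon(\bm A,B)=\{(\bm\lambda,\nu)\in\mathbb{R}^d\times\mathbb{C}:\dot\mu^{C}_{(\bm\lambda,\nu)}(\bm A,B)\le\epsilon\}$. Define $$F_{(\bm\lambda,\nu)}(\bm A,B)=\sum_{i=1}^d\big(G_i+G_i^\dagger\big)-\sum_{i=1}^d\big(H_i+H_i^\dagger\big),\quad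 G_i=(A_i-\lambda_i I)(B-\nu I)\otimes\Gamma_iP,\quad H_i=(A_i-\lambda_i I)(B-\nu I)^\dagger\otimes\Gamma_iQ.$$ All matrix norms are operator norms; vector norms are Euclidean. *)

(* Defs.v *)
From HB Require Import structures.
From mathcomp Require Import all_boot all_order all_algebra.
From mathcomp Require Import boolp classical_sets reals.
From mathcomp Require Import complex mxtens.
Set Implicit Arguments. Unset Strict Implicit. Unset Printing Implicit Defensive.
Import Order.TTheory GRing.Theory Num.Theory.
Local Open Scope ring_scope.
Local Open Scope complex_scope.
Local Open Scope classical_set_scope.

Section Localizer.
Variable R : realType.
Local Notation C := R[i].

Definition adjmx {p q : nat} (A : 'M[C]_(p, q)) : 'M[C]_(q, p) :=
  \matrix_(i, j) ((A j i)^*)%C.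

Definition is_hermitian {p : nat} (A : 'M[C]_p) : Prop := adjmx A = A.

Definition vnorm {p : nat} (v : 'cV[C]_p) : R :=
  Num.sqrt (\sum_(i < p) (ComplexField.Normc.normc (v i 0)) ^+ 2).

Definition opnorm {p q : nat} (M : 'M[C]_(p, q)) : R :=
  sup [set vnorm (M *m v) | v in [set v : 'cV[C]_q | vnorm v = 1]].

Definition sigma_min {p : nat} (M : 'M[C]_p) : R :=
  inf [set vnorm (M *m v) | v in [set v : 'cV[C]_p | vnorm v = 1]].

(* Clifford representation of size 2m (written m + m) *)
Definition is_clifford {d m : nat} (Gamma : 'I_d -> 'M[C]_(m + m)) : Prop :=
  (forall i, is_hermitian (Gamma i)) /\
  (forall i, Gamma i *m Gamma i = 1%:M) /\
  (forall i j, i != j -> Gamma i *m Gamma j = - (Gamma j *m Gamma i)).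

Definition Pmx (m : nat) : 'M[C]_(m + m) := block_mx 1%:M 0 0 0.
Definition Qmx (m : nat) : 'M[C]_(m + m) := block_mx 0 0 0 1%:M.

Definition localizer {n d m : nat} (Gamma : 'I_d -> 'M[C]_(m + m))
  (A : 'I_d -> 'M[C]_n) (B : 'M[C]_n) (lam : 'I_d -> R) (nu : C)
  : 'M[C]_(n * (m + m)) :=
  \sum_(i < d) ((A i - (lam i)%:C%:M) *t Gamma i)
  + ((B - nu%:M) *t Pmx m) - (adjmx (B - nu%:M) *t Qmx m).

Definition clifford_radial_gap {n d m : nat} (Gamma : 'I_d -> 'M[C]_(m + m))
  (A : 'I_d -> 'M[C]_n) (B : 'M[C]_n) (lam : 'I_d -> R) (nu : C) : R :=
  sigma_min (localizer Gamma A B lam nu).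

Definition in_clifford_pseudospectrum {n d m : nat} (Gamma : 'I_d -> 'M[C]_(m + m))
  (eps : R) (A : 'I_d -> 'M[C]_n) (B : 'M[C]_n) (lam : 'I_d -> R) (nu : C) : Prop :=
  clifford_radial_gap Gamma A B lam nu <= eps.

Definition Fmx {n d m : nat} (Gamma : 'I_d -> 'M[C]_(m + m))
  (A : 'I_d -> 'M[C]_n) (B : 'M[C]_n) (lam : 'I_d -> R) (nu : C)
  : 'M[C]_(n * (m + m)) :=
  let G i := ((A i - (lam i)%:C%:M) *m (B - nu%:M)) *t (Gamma i *m Pmx m) in
  let H i := ((A i - (lam i)%:C%:M) *m adjmx (B - nu%:M)) *t (Gamma i *m Qmx m) in
  \sum_(i < d) (G i + adjmx (G i)) - \sum_(i < d) (H i + adjmx (H i)).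

End Localizer.

(* Main.v *)
Require Import Defs.
From HB Require Import structures.
From mathcomp Require Import all_boot all_order all_algebra.
From mathcomp Require Import boolp classical_sets reals.
From mathcomp Require Import complex mxtens.
From mathcomp Require Import ring lra.
Set Implicit Arguments. Unset Strict Implicit. Unset Printing Implicit Defensive.
Import Order.TTheory GRing.Theory Num.Theory.
Local Open Scope ring_scope.
Local Open Scope complex_scope.

Section S.
Variable R : realType.
Local Notation C := R[i].
Local Notation normc := (@ComplexField.Normc.normc R).

Lemma normc2 (z : C) : normc z ^+ 2 = complex.Re z ^+ 2 + complex.Im z ^+ 2.
Proof. case: z => a b /=. by rewrite sqr_sqrtr // addr_ge0 // sqr_ge0. Qed.

Lemma normc2_conj (z : C) : normc z ^+ 2 = complex.Re (conjc z * z).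
Proof. rewrite normc2; case: z => a b /=. ring. Qed.

Lemma ReD (x y : C) : complex.Re (x + y) = complex.Re x + complex.Re y.
Proof. exact: raddfD. Qed.
Lemma Re_sum (I : finType) (F : I -> C) : complex.Re (\sum_i F i) = \sum_i complex.Re (F i).
Proof. exact: raddf_sum. Qed.

Definition nsq {p} (v : 'cV[C]_p) : R := \sum_i normc (v i 0) ^+ 2.
Definition dotc {p} (u w : 'cV[C]_p) : C := \sum_i conjc (u i 0) * w i 0.

Lemma nsq_ge0 p (v : 'cV[C]_p) : 0 <= nsq v.
Proof. by apply: sumr_ge0 => i _; rewrite sqr_ge0. Qed.

Lemma vnorm_sqr p (v : 'cV[C]_p) : vnorm v ^+ 2 = nsq v.
Proof. by rewrite /vnorm sqr_sqrtr // nsq_ge0. Qed.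

Lemma nsq_dot p (v : 'cV[C]_p) : nsq v = complex.Re (dotc v v).
Proof. by rewrite /nsq /dotc Re_sum; apply: eq_bigr => i _; rewrite normc2_conj. Qed.

Lemma dotc_adj p q (u : 'cV[C]_p) (M : 'M[C]_(p, q)) w :
  dotc u (M *m w) = dotc (adjmx M *m u) w.
Proof.
rewrite /dotc.
under eq_bigr => i _ do rewrite mxE mulr_sumr.
rewrite exchange_big /=; apply: eq_bigr => k _.
rewrite !mxE (rmorph_sum (@conjc R)) mulr_suml; apply: eq_bigr => i _.
rewrite !mxE (rmorphM (@conjc R)).
move: (M i k) (u i 0) (w k 0) => [a b] [c e] [f g] /=.
apply/eqP; rewrite eq_complex /=; apply/andP; split; apply/eqP; ring.
Qed.


Lemma conjcK' (z : C) : conjc (conjc z) = z.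
Proof. by case: z => a b /=; rewrite opprK. Qed.
Lemma conjcD' (z w : C) : conjc (z + w) = conjc z + conjc w.
Proof. by move: z w => [a b] [c e] /=; apply/eqP; rewrite eq_complex /= opprD !eqxx. Qed.
Lemma conjcN' (z : C) : conjc (- z) = - conjc z.
Proof. by case: z. Qed.
Lemma conjcM' (z w : C) : conjc (z * w) = conjc z * conjc w.
Proof. move: z w => [a b] [c e] /=; apply/eqP; rewrite eq_complex /=; apply/andP; split; apply/eqP; ring. Qed.
Lemma conjc_sum' (I : finType) (F : I -> C) : conjc (\sum_i F i) = \sum_i conjc (F i).
Proof. exact: (rmorph_sum (@conjc R)). Qed.
Lemma conjc0' : conjc (0 : C) = 0.
Proof. by apply/eqP; rewrite eq_complex /= oppr0 !eqxx. Qed.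
Lemma conjc_nat' k : conjc (k%:R : C) = k%:R.
Proof. exact: conjc_nat. Qed.

Lemma adjmxK p q (A : 'M[C]_(p, q)) : adjmx (adjmx A) = A.
Proof. by apply/matrixP => i j; rewrite !mxE conjcK'. Qed.
Lemma adjmx_mul p q r (A : 'M[C]_(p, q)) (B : 'M[C]_(q, r)) :
  adjmx (A *m B) = adjmx B *m adjmx A.
Proof.
apply/matrixP => i j; rewrite !mxE conjc_sum'; apply: eq_bigr => k _.
by rewrite !mxE conjcM' mulrC.
Qed.
Lemma adjmxD p q (A B : 'M[C]_(p, q)) : adjmx (A + B) = adjmx A + adjmx B.
Proof. by apply/matrixP => i j; rewrite !mxE conjcD'. Qed.
Lemma adjmxN p q (A : 'M[C]_(p, q)) : adjmx (- A) = - adjmx A.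
Proof. by apply/matrixP => i j; rewrite !mxE conjcN'. Qed.
Lemma adjmxB p q (A B : 'M[C]_(p, q)) : adjmx (A - B) = adjmx A - adjmx B.
Proof. by rewrite adjmxD adjmxN. Qed.
Lemma adjmx_sum p q (I : finType) (F : I -> 'M[C]_(p, q)) :
  adjmx (\sum_i F i) = \sum_i adjmx (F i).
Proof.
apply/matrixP => i j; rewrite !mxE summxE conjc_sum' summxE.
by apply: eq_bigr => k _; rewrite !mxE.
Qed.
Lemma adjmx_scalar p (c : C) : adjmx (c%:M : 'M[C]_p) = (conjc c)%:M.
Proof.
apply/matrixP => i j; rewrite !mxE eq_sym; case: (i == j); rewrite /= ?mulr1n ?mulr0n //.
exact: conjc0'.
Qed.
Lemma adjmx1 p : adjmx (1%:M : 'M[C]_p) = 1%:M.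
Proof. by rewrite adjmx_scalar; congr (_%:M); apply/eqP; rewrite eq_complex /= oppr0 !eqxx. Qed.
Lemma adjmx_tens p q r s (A : 'M[C]_(p, q)) (B : 'M[C]_(r, s)) :
  adjmx (A *t B) = adjmx A *t adjmx B.
Proof. by apply/matrixP => i j; rewrite !mxE conjcM'. Qed.
Lemma tensmxDl p q r s (A B : 'M[C]_(p, q)) (D : 'M[C]_(r, s)) :
  (A + B) *t D = A *t D + B *t D.
Proof. by apply/matrixP => i j; rewrite !mxE mulrDl. Qed.
Lemma tensmxNl p q r s (A : 'M[C]_(p, q)) (D : 'M[C]_(r, s)) :
  (- A) *t D = - (A *t D).
Proof. by apply/matrixP => i j; rewrite !mxE mulNr. Qed.
Lemma tensmxNr p q r s (A : 'M[C]_(p, q)) (D : 'M[C]_(r, s)) :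
  A *t (- D) = - (A *t D).
Proof. by apply/matrixP => i j; rewrite !mxE mulrN. Qed.
Lemma tensmxBl p q r s (A B : 'M[C]_(p, q)) (D : 'M[C]_(r, s)) :
  (A - B) *t D = A *t D - B *t D.
Proof. by rewrite tensmxDl tensmxNl. Qed.
Lemma tensmx_suml p q r s (I : finType) (F : I -> 'M[C]_(p, q)) (D : 'M[C]_(r, s)) :
  (\sum_i F i) *t D = \sum_i (F i *t D).
Proof.
apply/matrixP => i j; rewrite !mxE !summxE mulr_suml; apply: eq_bigr => k _.
by rewrite !mxE.
Qed.

Lemma comm_shift p (A B : 'M[C]_p) (a b : C) :
  (A - a%:M) *m (B - b%:M) - (B - b%:M) *m (A - a%:M) = A *m B - B *m A.
Proof.
rewrite !mulmxBl !mulmxBr !mul_mx_scalar !mul_scalar_mx.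
apply/matrixP => i j; rewrite !mxE.
set x := (A *m B) i j; set y := (B *m A) i j.
case: (i == j); rewrite /= ?mulr1n ?mulr0n; ring.
Qed.


Lemma sum_tens (V : nmodType) p q (F : 'I_(p * q)%N -> V) :
  \sum_(k < (p * q)%N) F k = \sum_(c < p) \sum_(d < q) F (mxtens_index (c, d)).
Proof.
rewrite (reindex (@mxtens_index p q)) /=.
  by rewrite pair_big; apply: eq_bigr => -[c d] _.
by exists (@mxtens_unindex p q) => x _; rewrite (mxtens_indexK, mxtens_unindexK).
Qed.

Definition comp {p q} (v : 'cV[C]_(p * q)%N) (j : 'I_q) : 'cV[C]_p :=
  \col_a v (mxtens_index (a, j)) 0.

Lemma nsq_comp p q (v : 'cV[C]_(p * q)%N) : nsq v = \sum_j nsq (comp v j).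
Proof.
rewrite /nsq sum_tens exchange_big /=; apply: eq_bigr => j _.
by apply: eq_bigr => a _; rewrite mxE.
Qed.

Lemma tens_apply p q (M : 'M[C]_p) (E : 'M[C]_q) (v : 'cV[C]_(p * q)%N) a b :
  (forall x y, x != y -> E x y = 0) ->
  ((M *t E) *m v) (mxtens_index (a, b)) 0 = E b b * (M *m comp v b) a 0.
Proof.
move=> hE; rewrite mxE sum_tens mxE mulr_sumr; apply: eq_bigr => c _.
rewrite (bigD1 b) //= big1 ?addr0; last first.
  by move=> d hd; rewrite tensmxE hE ?mulr0 ?mul0r // eq_sym.
by rewrite tensmxE !mxE mulrCA mulrA.
Qed.

Lemma nsq_tens p q (M : 'M[C]_p) (E : 'M[C]_q) (v : 'cV[C]_(p * q)%N) :
  (forall x y, x != y -> E x y = 0) ->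
  nsq ((M *t E) *m v) = \sum_j normc (E j j) ^+ 2 * nsq (M *m comp v j).
Proof.
move=> hE; rewrite /nsq sum_tens exchange_big /=; apply: eq_bigr => j _.
rewrite mulr_sumr; apply: eq_bigr => a _.
by rewrite tens_apply // ComplexField.Normc.normcM exprMn.
Qed.

Lemma Pmx_E m (b d : 'I_(m + m)%N) : Pmx R m b d = ((b == d) && (b < m)%N)%:R.
Proof.
rewrite -(splitK b) -(splitK d); case: (split b) => b'; case: (split d) => d' /=;
rewrite /Pmx ?block_mxEul ?block_mxEur ?block_mxEdl ?block_mxEdr !mxE //=.
- by rewrite -val_eqE /= ltn_ord andbT.
- by rewrite -val_eqE /= ltn_ord andbT; case: eqP => // e; move: (ltn_ord b'); rewrite e ltnNge leq_addr.
- by rewrite -val_eqE /= ltnNge leq_addr andbF.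
- by rewrite -val_eqE /= ltnNge leq_addr andbF.
Qed.

Lemma Qmx_E m (b d : 'I_(m + m)%N) : Qmx R m b d = ((b == d) && ~~ (b < m)%N)%:R.
Proof.
rewrite -(splitK b) -(splitK d); case: (split b) => b'; case: (split d) => d' /=;
rewrite /Qmx ?block_mxEul ?block_mxEur ?block_mxEdl ?block_mxEdr !mxE //=.
- by rewrite ltn_ord andbF.
- by rewrite ltn_ord andbF.
- by rewrite -val_eqE /= ltnNge leq_addr andbT; case: eqP => // e; move: (ltn_ord d'); rewrite -e ltnNge leq_addr.
- by rewrite -val_eqE /= ltnNge leq_addr andbT -val_eqE /= eqn_add2l.
Qed.


Lemma sqrt_le (N a : R) : 0 <= a -> N <= a ^+ 2 -> Num.sqrt N <= a.
Proof. by move=> a0 h; rewrite -(ger0_norm a0) -sqrtr_sqr; apply: ler_wsqrtr. Qed.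

Lemma normc_ge0' (z : C) : 0 <= normc z.
Proof. by case: z => a b /=; apply: sqrtr_ge0. Qed.

Lemma normc_sum (I : finType) (F : I -> C) : normc (\sum_i F i) <= \sum_i normc (F i).
Proof.
apply: (big_ind2 (fun x y => normc x <= y)).
- by rewrite ComplexField.Normc.normc0.
- by move=> x1 y1 x2 y2 h1 h2; apply: le_trans (le_normcD _ _) _; apply: lerD.
- by move=> i _.
Qed.

Lemma sum_sq_le (I : finType) (F : I -> R) : (forall i, 0 <= F i) ->
  \sum_i F i ^+ 2 <= (\sum_i F i) ^+ 2.
Proof.
move=> h.
suff [] : 0 <= \sum_i F i /\ \sum_i F i ^+ 2 <= (\sum_i F i) ^+ 2 by [].
apply: (big_ind2 (fun x y => 0 <= y /\ x <= y ^+ 2)).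
- by rewrite expr0n.
- move=> x1 y1 x2 y2 [h1 h1'] [h2 h2']; split; first exact: addr_ge0.
  have: 0 <= y1 * y2 by exact: mulr_ge0.
  rewrite sqrrD; lra.
- by move=> i _; split.
Qed.

Lemma entry_le_vnorm p (x : 'cV[C]_p) b : normc (x b 0) <= vnorm x.
Proof.
have -> : normc (x b 0) = Num.sqrt (normc (x b 0) ^+ 2).
  by rewrite sqrtr_sqr ger0_norm // normc_ge0'.
rewrite /vnorm; apply: ler_wsqrtr; rewrite (bigD1 b) //= lerDl.
by apply: sumr_ge0 => i _; apply: sqr_ge0.
Qed.

Lemma vnorm_ge0 p (x : 'cV[C]_p) : 0 <= vnorm x.
Proof. exact: sqrtr_ge0. Qed.

Definition mxK {p q} (M : 'M[C]_(p, q)) : R := \sum_a \sum_b normc (M a b).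

Lemma mxK_bound p q (M : 'M[C]_(p, q)) x : vnorm (M *m x) <= mxK M * vnorm x.
Proof.
have h0 : 0 <= vnorm x by exact: vnorm_ge0.
have hr : forall a, normc ((M *m x) a 0) <= (\sum_b normc (M a b)) * vnorm x.
  move=> a; rewrite mxE; apply: le_trans; first exact: normc_sum.
  rewrite mulr_suml; apply: ler_sum => b _.
  by rewrite ComplexField.Normc.normcM ler_wpM2l ?normc_ge0' ?entry_le_vnorm.
apply: sqrt_le; first by apply: mulr_ge0 => //; do 2 apply: sumr_ge0 => ? _; apply: normc_ge0'.
rewrite /mxK mulr_suml.
apply: le_trans; last apply: sum_sq_le; last first.
  by move=> a; apply: mulr_ge0 => //; apply: sumr_ge0 => ? _; apply: normc_ge0'.
apply: ler_sum => a _; rewrite lerXn2r ?nnegrE ?normc_ge0' //.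
by apply: mulr_ge0 => //; apply: sumr_ge0 => ? _; apply: normc_ge0'.
Qed.


Lemma vnorm_sqrt p (w : 'cV[C]_p) : vnorm w = Num.sqrt (nsq w).
Proof. by []. Qed.

Lemma nsq_scale p (c : R) (w : 'cV[C]_p) : nsq (c%:C *: w) = c ^+ 2 * nsq w.
Proof.
rewrite /nsq mulr_sumr; apply: eq_bigr => i _; rewrite mxE !normc2.
by case: (w i 0) => a b /=; ring.
Qed.

Lemma vnorm_scale p (c : R) (w : 'cV[C]_p) : 0 <= c -> vnorm (c%:C *: w) = c * vnorm w.
Proof.
by move=> c0; rewrite !vnorm_sqrt nsq_scale sqrtrM ?sqr_ge0 // sqrtr_sqr ger0_norm.
Qed.


Lemma unit_exists p : (0 < p)%N -> exists u : 'cV[C]_p, vnorm u = 1.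
Proof.
move=> hp; exists (delta_mx (Ordinal hp) 0).
rewrite vnorm_sqrt /nsq (bigD1 (Ordinal hp)) //= big1 ?addr0.
  by rewrite mxE !eqxx /= expr1n expr0n addr0 sqrtr1 expr1n sqrtr1.
by move=> i hi; rewrite mxE (negbTE hi) /= !expr0n addr0 sqrtr0 expr0n.
Qed.

Lemma opnorm_ub p q (M : 'M[C]_(p, q)) (u : 'cV[C]_q) : vnorm u = 1 ->
  vnorm (M *m u) <= opnorm M.
Proof.
move=> hu; apply: sup_upper_bound; last by exists u.
split; first by exists (vnorm (M *m u)); exists u.
exists (mxK M) => _ [v hv <-]; apply: le_trans (mxK_bound M v) _.
by rewrite hv mulr1.
Qed.

Lemma opnorm_ge0 p q (M : 'M[C]_(p, q)) : (0 < q)%N -> 0 <= opnorm M.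
Proof.
move=> hq; have [u hu] := unit_exists hq.
by apply: le_trans (opnorm_ub M hu); apply: vnorm_ge0.
Qed.

Lemma opnorm_bound p q (M : 'M[C]_(p, q)) x : vnorm (M *m x) <= opnorm M * vnorm x.
Proof.
have [hx|hx] := eqVneq (vnorm x) 0.
  by rewrite hx mulr0; apply: le_trans (mxK_bound M x) _; rewrite hx mulr0.
have tpos : 0 < vnorm x by rewrite lt_def hx vnorm_ge0.
set t := vnorm x in hx tpos *.
have hti : 0 <= t^-1 by rewrite invr_ge0 ltW.
have hu : vnorm (t^-1%:C *: x) = 1.
  by rewrite vnorm_scale // mulVf.
have := opnorm_ub M hu; rewrite -scalemxAr vnorm_scale //.
move=> h; have := ler_wpM2r (ltW tpos) h.
by rewrite /= mulrAC mulVf // mul1r.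
Qed.


Lemma dotcD p (u w1 w2 : 'cV[C]_p) : dotc u (w1 + w2) = dotc u w1 + dotc u w2.
Proof. by rewrite /dotc -big_split; apply: eq_bigr => i _; rewrite mxE mulrDr. Qed.
Lemma dotcN p (u w : 'cV[C]_p) : dotc u (- w) = - dotc u w.
Proof. by rewrite /dotc -sumrN; apply: eq_bigr => i _; rewrite mxE mulrN. Qed.
Lemma dotc_sumr p (I : finType) (u : 'cV[C]_p) (F : I -> 'cV[C]_p) :
  dotc u (\sum_i F i) = \sum_i dotc u (F i).
Proof.
rewrite /dotc exchange_big /=; apply: eq_bigr => k _.
by rewrite summxE mulr_sumr.
Qed.

Definition rq {p} (M : 'M[C]_p) (v : 'cV[C]_p) : R := complex.Re (dotc v (M *m v)).

Lemma rqD p (M1 M2 : 'M[C]_p) v : rq (M1 + M2) v = rq M1 v + rq M2 v.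
Proof. by rewrite /rq mulmxDl dotcD ReD. Qed.
Lemma rqN p (M : 'M[C]_p) v : rq (- M) v = - rq M v.
Proof. by rewrite /rq mulNmx dotcN; exact: raddfN. Qed.
Lemma rqB p (M1 M2 : 'M[C]_p) v : rq (M1 - M2) v = rq M1 v - rq M2 v.
Proof. by rewrite rqD rqN. Qed.
Lemma rq_sum p (I : finType) (F : I -> 'M[C]_p) v : rq (\sum_i F i) v = \sum_i rq (F i) v.
Proof. by rewrite /rq mulmx_suml dotc_sumr Re_sum. Qed.
Lemma rq_sum_cond p (I : finType) (P : pred I) (F : I -> 'M[C]_p) v :
  rq (\sum_(i | P i) F i) v = \sum_(i | P i) rq (F i) v.
Proof.
rewrite big_mkcond rq_sum [RHS]big_mkcond; apply: eq_bigr => i _.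
by case: (P i) => //; rewrite /rq mul0mx /dotc big1 // => k _; rewrite mxE mulr0.
Qed.

Lemma rq_adj p q (N : 'M[C]_(q, p)) v : rq (adjmx N *m N) v = nsq (N *m v).
Proof. by rewrite /rq -mulmxA dotc_adj adjmxK nsq_dot. Qed.

Lemma nsq_expand p (v w : 'cV[C]_p) (s : R) :
  nsq (v + s%:C *: w) = nsq v + 2 * s * complex.Re (dotc v w) + s ^+ 2 * nsq w.
Proof.
rewrite /nsq /dotc Re_sum mulr_sumr mulr_sumr -!big_split /=.
apply: eq_bigr => i _; rewrite !mxE !normc2.
by move: (v i 0) (w i 0) => [a b] [c e] /=; ring.
Qed.

Lemma dot_lower p (v w : 'cV[C]_p) : nsq v = 1 -> - vnorm w <= complex.Re (dotc v w).
Proof.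
move=> hv.
have key : forall s, 0 < s -> 0 <= 1 + 2 * s * complex.Re (dotc v w) + s ^+ 2 * nsq w.
  by move=> s _; have := nsq_ge0 (v + s%:C *: w); rewrite nsq_expand hv.
set r := complex.Re (dotc v w) in key *.
have [h0|h0] := eqVneq (vnorm w) 0.
  have hn : nsq w = 0 by rewrite -vnorm_sqr h0 expr0n.
  rewrite h0 oppr0; rewrite leNgt; apply/negP => rneg.
  have := key (- r^-1); rewrite hn mulr0 addr0 oppr_gt0 invr_lt0 => /(_ rneg).
  by rewrite mulrN mulNr -mulrA mulVf ?lt_eqF // mulr1; lra.
have tpos : 0 < vnorm w by rewrite lt_def h0 vnorm_ge0.
have tinv : 0 < (vnorm w)^-1 by rewrite invr_gt0.
have := key _ tinv; rewrite -vnorm_sqr.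
set t := vnorm w in tpos h0 *.
have ht : t^-1 * t = 1 by rewrite mulVf.
rewrite exprVn mulVf ?expf_neq0 // => h.
have ht' : t * t^-1 = 1 by rewrite mulfV.
have hr : 0 <= (r + t) * t^-1 by rewrite mulrDl ht'; lra.
by move: hr; rewrite pmulr_lge0 ?invr_gt0 //; lra.
Qed.

Lemma rq_lower p (M : 'M[C]_p) v : nsq v = 1 -> - vnorm (M *m v) <= rq M v.
Proof. exact: dot_lower. Qed.


Lemma normc1sq : normc (1 : C) ^+ 2 = 1.
Proof. by rewrite normc2 /= expr1n expr0n addr0. Qed.
Lemma normc0sq : normc (0 : C) ^+ 2 = 0.
Proof. by rewrite normc2 /= expr0n addr0. Qed.

Lemma diag1 p (x y : 'I_p) : x != y -> (1%:M : 'M[C]_p) x y = 0.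
Proof. by move=> h; rewrite mxE (negbTE h). Qed.
Lemma diagP m (x y : 'I_(m + m)%N) : x != y -> Pmx R m x y = 0.
Proof. by move=> h; rewrite Pmx_E (negbTE h). Qed.
Lemma diagQ m (x y : 'I_(m + m)%N) : x != y -> Qmx R m x y = 0.
Proof. by move=> h; rewrite Qmx_E (negbTE h). Qed.

Lemma adjP m : adjmx (Pmx R m) = Pmx R m.
Proof.
apply/matrixP => i j; rewrite mxE !Pmx_E conjc_nat' eq_sym.
by case: eqP => [->|].
Qed.
Lemma adjQ m : adjmx (Qmx R m) = Qmx R m.
Proof.
apply/matrixP => i j; rewrite mxE !Qmx_E conjc_nat' eq_sym.
by case: eqP => [->|].
Qed.
Lemma PP m : Pmx R m *m Pmx R m = Pmx R m.
Proof. by rewrite /Pmx mulmx_block !mulmx0 !mul0mx !addr0 mulmx1. Qed.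
Lemma QQ m : Qmx R m *m Qmx R m = Qmx R m.
Proof. by rewrite /Qmx mulmx_block !mulmx0 !mul0mx !addr0 add0r mulmx1. Qed.
Lemma PQ m : Pmx R m *m Qmx R m = 0.
Proof. by rewrite /Pmx /Qmx mulmx_block !mulmx0 !mul0mx !addr0 block_mx0. Qed.
Lemma QP m : Qmx R m *m Pmx R m = 0.
Proof. by rewrite /Pmx /Qmx mulmx_block !mulmx0 !mul0mx !addr0 block_mx0. Qed.

Lemma tens11 p q : (1%:M : 'M[C]_p) *t (1%:M : 'M[C]_q) = 1%:M.
Proof.
apply/matrixP => i j; case: (mxtens_indexP i) => a b; case: (mxtens_indexP j) => c e.
rewrite tensmxE !mxE (inj_eq (can_inj (@mxtens_indexK p q))) xpair_eqE.
by case: (a == c); case: (b == e); rewrite /= ?mulr1n ?mulr0n ?mulr1 ?mulr0.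
Qed.

Lemma real_conj (x : R) : conjc (x%:C : C) = x%:C.
Proof. by apply/eqP; rewrite eq_complex /= oppr0 !eqxx. Qed.


Lemma tens1_bound p q (M : 'M[C]_p) (w : 'cV[C]_(p * q)%N) : (0 < p)%N ->
  vnorm ((M *t (1%:M : 'M[C]_q)) *m w) <= opnorm M * vnorm w.
Proof.
move=> hp; have h0 := opnorm_ge0 M hp.
rewrite [X in X <= _]vnorm_sqrt; apply: sqrt_le; first by apply: mulr_ge0 => //; apply: vnorm_ge0.
rewrite nsq_tens; last exact: diag1.
rewrite exprMn vnorm_sqr nsq_comp mulr_sumr; apply: ler_sum => j _.
rewrite mxE eqxx mulr1n normc1sq mul1r -!vnorm_sqr -exprMn.
rewrite lerXn2r ?nnegrE ?vnorm_ge0 ?opnorm_bound //.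
by apply: mulr_ge0 => //; apply: vnorm_ge0.
Qed.

Lemma unitary_nsq p q (U : 'M[C]_q) (v : 'cV[C]_(p * q)%N) : adjmx U *m U = 1%:M ->
  nsq (((1%:M : 'M[C]_p) *t U) *m v) = nsq v.
Proof.
move=> hU; rewrite -rq_adj adjmx_tens adjmx1 tensmx_mul mul1mx hU tens11.
by rewrite /rq mul1mx nsq_dot.
Qed.

Lemma tensU_bound p q (M : 'M[C]_p) (U : 'M[C]_q) (v : 'cV[C]_(p * q)%N) : (0 < p)%N ->
  adjmx U *m U = 1%:M -> vnorm ((M *t U) *m v) <= opnorm M * vnorm v.
Proof.
move=> hp hU.
have -> : M *t U = (M *t 1%:M) *m (1%:M *t U) by rewrite tensmx_mul mulmx1 mul1mx.
rewrite -mulmxA; apply: le_trans (tens1_bound _ _ hp) _.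
by rewrite !vnorm_sqrt unitary_nsq.
Qed.

Lemma swap_sum d (f : 'I_d -> 'I_d -> R) :
  \sum_i \sum_(k | i != k) f i k = \sum_i \sum_(k | i != k) f k i.
Proof.
under eq_bigr => i _ do rewrite big_mkcond.
under [RHS]eq_bigr => i _ do rewrite big_mkcond.
rewrite exchange_big /=; apply: eq_bigr => k _; apply: eq_bigr => i _.
by rewrite eq_sym.
Qed.

Lemma nsq0 p : nsq (0 : 'cV[C]_p) = 0.
Proof. by rewrite /nsq big1 // => i _; rewrite mxE normc0sq. Qed.

Lemma nsq_eq0 p (w : 'cV[C]_p) : nsq w = 0 -> w = 0.
Proof.
move=> h; apply/matrixP => i j; rewrite [j]ord1 mxE.
have := @psumr_eq0P _ _ _ (fun k => normc (w k 0) ^+ 2) (fun k _ => sqr_ge0 (normc (w k 0))) h i isT.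
by move/eqP; rewrite expf_eq0 /= => /eqP /ComplexField.Normc.eq0_normc.
Qed.

Lemma pigeon (I : finType) (qf w : I -> R) (T : R) :
  (forall j, 0 <= w j) -> \sum_j w j = 1 -> \sum_j qf j <= T ->
  (forall j, w j = 0 -> qf j = 0) ->
  exists j, 0 < w j /\ qf j <= T * w j.
Proof.
move=> w0 w1 qT qz.
have [/existsP [j /andP [h1 h2]]|hn] := boolP [exists j, (0 < w j) && (qf j <= T * w j)].
  by exists j.
have [/existsP [j0 hj0]|hn0] := boolP [exists j, 0 < w j]; last first.
  exfalso; have : \sum_j w j = 0.
    apply: big1 => j _; apply/eqP; rewrite eq_le w0 andbT leNgt.
    by apply/negP => h; move: hn0 => /negP; apply; apply/existsP; exists j.
  by rewrite w1 => /eqP; rewrite oner_eq0.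
have hall : forall j, T * w j <= qf j.
  move=> j; have [hw|hw] := eqVneq (w j) 0; first by rewrite hw qz // mulr0.
  have wpos : 0 < w j by rewrite lt_def hw w0.
  rewrite leNgt; apply/negP => h; move: hn => /negP; apply; apply/existsP; exists j.
  by rewrite wpos ltW.
have hj0' : T * w j0 < qf j0.
  rewrite ltNge; apply/negP => h; move: hn => /negP; apply; apply/existsP; exists j0.
  by rewrite hj0 h.
have : \sum_j T * w j < \sum_j qf j.
  rewrite (bigD1 j0) //= [X in _ < X](bigD1 j0) //=.
  by apply: ltr_leD => //; apply: ler_sum => j _; apply: hall.
by rewrite -mulr_sumr w1 mulr1; lra.
Qed.

Lemma normalize p (v0 : 'cV[C]_p) : v0 != 0 ->
  exists2 t : R, 0 < t & nsq (t%:C *: v0) = 1.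
Proof.
move=> hv0; have hn : nsq v0 != 0 by apply/eqP => /nsq_eq0 h; rewrite h eqxx in hv0.
have hpos : 0 < vnorm v0 by rewrite vnorm_sqrt sqrtr_gt0 lt_def hn nsq_ge0.
exists (vnorm v0)^-1; first by rewrite invr_gt0.
by rewrite nsq_scale -vnorm_sqr -exprMn mulVf ?expr1n // gt_eqF.
Qed.

Lemma choose_v N (L : 'M[C]_N) (e1 e2 : R) : (0 < N)%N -> 0 <= e1 -> 0 <= e2 ->
  sigma_min L <= e1 -> exists v, nsq v = 1 /\ nsq (L *m v) + e2 <= 2 * (e1 ^+ 2 + e2).
Proof.
move=> hN he1 he2 hs.
set S := ([set vnorm (L *m v) | v in [set v : 'cV[C]_N | vnorm v = 1]])%classic.
have S0 : (S !=set0)%classic.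
  by have [u hu] := unit_exists hN; exists (vnorm (L *m u)); exists u.
have [hpos|hz] := ltrP 0 (e1 ^+ 2 + e2).
  set tau := Num.sqrt (2 * e1 ^+ 2 + e2).
  have lt1 : e1 < tau.
    rewrite -(ger0_norm he1) -sqrtr_sqr /tau ltr_sqrt; first lra.
    have := sqr_ge0 e1; lra.
  have [_ [v hv <-] hlt] := inf_lt S0 (le_lt_trans hs lt1).
  exists v; split; first by rewrite -vnorm_sqr hv expr1n.
  have : vnorm (L *m v) ^+ 2 < tau ^+ 2 by rewrite ltrXn2r // vnorm_ge0.
  rewrite vnorm_sqr /tau sqr_sqrtr; last by have := sqr_ge0 e1; lra.
  lra.
have e10 : e1 = 0.
  by apply/eqP; rewrite -sqrf_eq0; apply/eqP; have := sqr_ge0 e1; lra.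
have e20 : e2 = 0 by have := sqr_ge0 e1; lra.
have hdet : \det L == 0.
  apply: contraT => hd.
  have hu : L \in unitmx by rewrite unitmxE unitfE.
  set K := mxK (invmx L).
  have key : forall w : 'cV[C]_N, vnorm w = 1 -> 1 <= K * vnorm (L *m w).
    move=> w hw; rewrite -hw; have := mxK_bound (invmx L) (L *m w).
    by rewrite mulKmx.
  have [u hu1] := unit_exists hN.
  have Kpos : 0 < K.
    rewrite ltNge; apply/negP => hK.
    have := key u hu1; have := vnorm_ge0 (L *m u); nra.
  have : K^-1 <= sigma_min L.
    apply: lb_le_inf => // _ [w hw <-].
    have := key w hw; move=> h1.
    rewrite -[vnorm _]mul1r -(mulVf (lt0r_neq0 Kpos)) -mulrA.
    by rewrite ler_pMr ?invr_gt0.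
  have : 0 < K^-1 by rewrite invr_gt0.
  rewrite /sigma_min -/S in hs *; lra.
have [r hr0 hrL] : exists2 r : 'rV[C]_N, r != 0 & r *m L^T = 0.
  by apply/det0P; rewrite det_tr.
have hv0 : r^T != 0 by apply: contra hr0 => /eqP h; apply/eqP; rewrite -[r]trmxK h trmx0.
have [t tpos ht] := normalize hv0.
exists (t%:C *: r^T); split => //.
have -> : L *m (t%:C *: r^T) = 0.
  by rewrite -scalemxAr -[L]trmxK -trmx_mul hrL trmx0 scaler0.
by rewrite nsq0 e10 e20; lra.
Qed.

Section Main.
Variables (n d m : nat) (Gamma : 'I_d -> 'M[C]_(m + m)) (A : 'I_d -> 'M[C]_n)
  (B : 'M[C]_n) (lam : 'I_d -> R) (nu : C).
Hypotheses (hGamma : is_clifford Gamma) (hA : forall k, is_hermitian (A k)).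

Definition X i := A i - (lam i)%:C%:M.
Definition Y := B - nu%:M.
Definition Smx := \sum_i (X i *t Gamma i).
Definition Tmx := Y *t Pmx R m - adjmx Y *t Qmx R m.
Definition NX i := X i *t (1%:M : 'M[C]_(m + m)).
Definition NB := Y *t Pmx R m.
Definition NC := adjmx Y *t Qmx R m.
Definition Kmx := \sum_i \sum_(k | i != k) ((X i *m X k) *t (Gamma i *m Gamma k)).

Lemma L_eq : localizer Gamma A B lam nu = Smx + Tmx.
Proof. by rewrite /localizer /Smx /Tmx addrA. Qed.

Lemma X_herm i : adjmx (X i) = X i.
Proof. by rewrite /X adjmxB adjmx_scalar real_conj hA. Qed.

Lemma G_herm i : adjmx (Gamma i) = Gamma i.
Proof. by case: hGamma => h _; apply: h. Qed.
Lemma GG i : Gamma i *m Gamma i = 1%:M.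
Proof. by case: hGamma => _ [h _]; apply: h. Qed.
Lemma G_anti i k : i != k -> Gamma i *m Gamma k = - (Gamma k *m Gamma i).
Proof. by case: hGamma => _ [_ h]; apply: h. Qed.

Lemma S_herm : adjmx Smx = Smx.
Proof.
by rewrite /Smx adjmx_sum; apply: eq_bigr => i _; rewrite adjmx_tens X_herm G_herm.
Qed.

Lemma adjT : adjmx Tmx = adjmx Y *t Pmx R m - Y *t Qmx R m.
Proof. by rewrite /Tmx adjmxB !adjmx_tens adjP adjQ adjmxK. Qed.

Lemma SS : Smx *m Smx = \sum_i (adjmx (NX i) *m NX i) + Kmx.
Proof.
rewrite /Smx /Kmx mulmx_suml -big_split /=; apply: eq_bigr => i _.
rewrite mulmx_sumr (bigD1 i) //=; congr (_ + _).
  by rewrite /NX adjmx_tens adjmx1 X_herm !tensmx_mul GG mulmx1.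
apply: eq_big => [k|k _]; first by rewrite eq_sym.
by rewrite tensmx_mul.
Qed.

Lemma STF : Smx *m Tmx + adjmx Tmx *m Smx = Fmx Gamma A B lam nu.
Proof.
have -> : adjmx Tmx *m Smx = adjmx (Smx *m Tmx) by rewrite adjmx_mul S_herm.
have ST : Smx *m Tmx = \sum_i (((X i *m Y) *t (Gamma i *m Pmx R m))
    - ((X i *m adjmx Y) *t (Gamma i *m Qmx R m))).
  rewrite /Smx /Tmx mulmx_suml; apply: eq_bigr => i _.
  by rewrite mulmxBr !tensmx_mul.
rewrite ST sumrB (adjmxB (\sum_i _)) !adjmx_sum /Fmx /=.
under [in RHS]eq_bigr => i _ do rewrite -/(X i) -/Y.
under [X in _ = _ - X]eq_bigr => i _ do rewrite -/(X i) -/Y.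
by rewrite !big_split /= opprD addrACA.
Qed.

Lemma TT : adjmx Tmx *m Tmx = adjmx NB *m NB + adjmx NC *m NC.
Proof.
rewrite adjT /Tmx /NB /NC !adjmx_tens adjP adjQ adjmxK.
by rewrite mulmxBl !mulmxBr !tensmx_mul PP QQ PQ QP !tensmx0 subr0 sub0r opprK.
Qed.

Lemma LL : adjmx (localizer Gamma A B lam nu) *m localizer Gamma A B lam nu =
  \sum_i (adjmx (NX i) *m NX i) + Kmx + Fmx Gamma A B lam nu
  + (adjmx NB *m NB + adjmx NC *m NC).
Proof.
rewrite L_eq adjmxD S_herm mulmxDl (mulmxDr Smx Smx Tmx) (mulmxDr (adjmx Tmx) Smx Tmx).
by rewrite SS -STF -TT !addrA.
Qed.


Lemma U_unitary i k : adjmx (Gamma i *m Gamma k) *m (Gamma i *m Gamma k) = 1%:M.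
Proof.
by rewrite adjmx_mul !G_herm -mulmxA (mulmxA (Gamma i)) GG mul1mx GG.
Qed.

Lemma K_bound v : (0 < n)%N -> nsq v = 1 ->
  - (\sum_i \sum_(k | i != k) opnorm (A i *m A k - A k *m A i)) <= 2 * rq Kmx v.
Proof.
move=> hn hv.
have hK : rq Kmx v = \sum_i \sum_(k | i != k) rq ((X i *m X k) *t (Gamma i *m Gamma k)) v.
  by rewrite /Kmx rq_sum; apply: eq_bigr => i _; rewrite rq_sum_cond.
have h2 : 2 * rq Kmx v = \sum_i \sum_(k | i != k)
    rq ((X i *m X k - X k *m X i) *t (Gamma i *m Gamma k)) v.
  rewrite mulr2n mulrDl mul1r hK.
  rewrite [X in X + _ = _]swap_sum -big_split /=; apply: eq_bigr => i _.
  rewrite -big_split /=; apply: eq_bigr => k hik.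
  have hki : k != i by rewrite eq_sym.
  by rewrite -rqD (G_anti hki) tensmxNr addrC tensmxBl.
rewrite h2 -sumrN; apply: ler_sum => i _; rewrite -sumrN; apply: ler_sum => k hik.
apply: le_trans (rq_lower _ hv); rewrite lerN2.
apply: le_trans (tensU_bound _ _ hn (U_unitary i k)) _.
rewrite vnorm_sqrt hv sqrtr1 mulr1 /X comm_shift.
by [].
Qed.

Definition qq (w : 'cV[C]_n) (a b : R) :=
  \sum_i nsq (X i *m w) + a * nsq (Y *m w) + b * nsq (adjmx Y *m w).
Definition pj (j : 'I_(m + m)%N) := normc (Pmx R m j j) ^+ 2.
Definition qj (j : 'I_(m + m)%N) := normc (Qmx R m j j) ^+ 2.

Lemma decomp v : nsq (localizer Gamma A B lam nu *m v) =
  \sum_j qq (comp v j) (pj j) (qj j) + rq Kmx v + rq (Fmx Gamma A B lam nu) v.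
Proof.
rewrite -rq_adj LL; move: (Fmx Gamma A B lam nu) => F.
rewrite !rqD rq_sum !rq_adj /NB /NC (nsq_tens _ _ (@diagP m)) (nsq_tens _ _ (@diagQ m)).
under eq_bigr => i _ do rewrite rq_adj /NX (nsq_tens _ _ (@diag1 (m + m)%N)).
under eq_bigr => i _ do under eq_bigr => j _ do rewrite mxE eqxx mulr1n normc1sq mul1r.
rewrite /qq !big_split /= [\sum_j \sum_i _]exchange_big /pj /qj /=.
lra.
Qed.

Lemma core v e2 : (0 < n)%N -> nsq v = 1 ->
  \sum_(i < d) \sum_(k < d | i != k) opnorm (A i *m A k - A k *m A i)
    + opnorm (Fmx Gamma A B lam nu) <= e2 ->
  \sum_j qq (comp v j) (pj j) (qj j) <= nsq (localizer Gamma A B lam nu *m v) + e2.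
Proof.
move=> hn hv hc.
have hK := K_bound hn hv.
have hF := rq_lower (Fmx Gamma A B lam nu) hv.
have hF2 := opnorm_bound (Fmx Gamma A B lam nu) v.
rewrite (vnorm_sqrt v) hv sqrtr1 mulr1 in hF2.
have hS : 0 <= \sum_(i < d) \sum_(k < d | i != k) opnorm (A i *m A k - A k *m A i).
  by do 2 apply: sumr_ge0 => ? _; apply: opnorm_ge0.
rewrite decomp; lra.
Qed.

Lemma qq_scale w (c : R) a b : qq (c%:C *: w) a b = c ^+ 2 * qq w a b.
Proof.
rewrite /qq; under eq_bigr => i _ do rewrite -scalemxAr nsq_scale.
by rewrite -!scalemxAr !nsq_scale -mulr_sumr; ring.
Qed.

Lemma qq0 a b : qq 0 a b = 0.
Proof.
rewrite /qq big1 => [|i _]; last by rewrite mulmx0 nsq0.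
by rewrite !mulmx0 nsq0 !mulr0 !addr0.
Qed.

Lemma final_sec (hn : (0 < n)%N) (hm : (0 < m)%N) (eps1 eps2 : R)
  (heps1 : 0 <= eps1) (heps2 : 0 <= eps2)
  (Hspec : in_clifford_pseudospectrum Gamma eps1 A B lam nu)
  (Hcomm : \sum_(i < d) \sum_(k < d | i != k) opnorm (A i *m A k - A k *m A i)
           + opnorm (Fmx Gamma A B lam nu) <= eps2) :
  exists psi : 'cV[C]_n, vnorm psi = 1 /\
    (Num.sqrt (\sum_(i < d) vnorm (A i *m psi - (lam i)%:C *: psi) ^+ 2
               + vnorm (B *m psi - nu *: psi) ^+ 2)
       <= Num.sqrt ((m + m)%:R) * Num.sqrt (eps1 ^+ 2 + eps2)
     \/
     Num.sqrt (\sum_(i < d) vnorm (A i *m psi - (lam i)%:C *: psi) ^+ 2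
               + vnorm (adjmx B *m psi - (nu^*)%C *: psi) ^+ 2)
       <= Num.sqrt ((m + m)%:R) * Num.sqrt (eps1 ^+ 2 + eps2)).
Proof.
have hN : (0 < n * (m + m))%N by rewrite muln_gt0 hn addn_gt0 hm.
have [v [hv hLv]] := choose_v hN heps1 heps2 Hspec.
have hc := core hn hv Hcomm.
set T := nsq (localizer Gamma A B lam nu *m v) + eps2 in hLv hc.
have hE : 0 <= eps1 ^+ 2 + eps2 by have := sqr_ge0 eps1; lra.
have hm2 : 2 <= (m + m)%:R :> R.
  by rewrite (ler_nat R 2); case: m hm => // m' _; rewrite addSn addnS.
have hT : T <= (m + m)%:R * (eps1 ^+ 2 + eps2).
  apply: le_trans hLv _; exact: ler_wpM2r.
have [j [wpos hqj]] : exists j, 0 < nsq (comp v j) /\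
    qq (comp v j) (pj j) (qj j) <= T * nsq (comp v j).
  apply: pigeon => //.
  - by move=> j; apply: nsq_ge0.
  - by rewrite -nsq_comp.
  - by move=> j /nsq_eq0 ->; apply: qq0.
set c := comp v j in wpos hqj.
have tpos : 0 < vnorm c by rewrite vnorm_sqrt sqrtr_gt0.
set t := vnorm c in tpos.
have hti : 0 <= t^-1 by rewrite invr_ge0 ltW.
exists (t^-1%:C *: c); split; first by rewrite vnorm_scale // mulVf // gt_eqF.
have hq : qq (t^-1%:C *: c) (pj j) (qj j) <= (m + m)%:R * (eps1 ^+ 2 + eps2).
  rewrite qq_scale; apply: le_trans hT.
  have -> : T = t^-1 ^+ 2 * (T * nsq c).
    by rewrite -vnorm_sqr -/t mulrC -mulrA -exprMn mulfV ?gt_eqF // expr1n mulr1.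
  by rewrite ler_wpM2l // sqr_ge0.
have hfin : forall z, z <= (m + m)%:R * (eps1 ^+ 2 + eps2) ->
    Num.sqrt z <= Num.sqrt ((m + m)%:R) * Num.sqrt (eps1 ^+ 2 + eps2).
  by move=> z hz; rewrite -sqrtrM ?ler0n //; apply: ler_wsqrtr.
have hX : forall i, A i *m (t^-1%:C *: c) - (lam i)%:C *: (t^-1%:C *: c) = X i *m (t^-1%:C *: c).
  by move=> i; rewrite /X mulmxBl mul_scalar_mx.
move: hq; rewrite /qq /pj /qj Pmx_E Qmx_E eqxx /=.
case: (j < m)%N => /=; rewrite ?normc1sq ?normc0sq => hq; [left|right]; apply: hfin.
- under eq_bigr => i _ do rewrite hX vnorm_sqr.
  rewrite -(mul_scalar_mx nu) -mulmxBl -/Y vnorm_sqr.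
  by move: hq; rewrite mul0r addr0 mul1r.
- under eq_bigr => i _ do rewrite hX vnorm_sqr.
  rewrite -(mul_scalar_mx (nu^*)%C) -mulmxBl vnorm_sqr.
  move: hq; rewrite /Y mul0r addr0 mul1r adjmxB adjmx_scalar.
  by [].
Qed.

End Main.

End S.

Unset Implicit Arguments.
Set Strict Implicit.

Theorem mainTheorem2 (R : realType) (n d m : nat)
  (hn : (0 < n)%N) (hd : (0 < d)%N) (hm : (0 < m)%N)
  (Gamma : 'I_d -> 'M[R[i]]_(m + m)) (hGamma : is_clifford Gamma)
  (A : 'I_d -> 'M[R[i]]_n) (hA : forall k : 'I_d, is_hermitian (A k))
  (B : 'M[R[i]]_n) (lam : 'I_d -> R) (nu : R[i]) (eps1 eps2 : R)
  (heps1 : 0 <= eps1) (heps2 : 0 <= eps2)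
  (Hspec : in_clifford_pseudospectrum Gamma eps1 A B lam nu)
  (Hcomm : \sum_(i < d) \sum_(k < d | i != k) opnorm (A i *m A k - A k *m A i)
           + opnorm (Fmx Gamma A B lam nu) <= eps2) :
  exists psi : 'cV[R[i]]_n, vnorm psi = 1 /\
    (Num.sqrt (\sum_(i < d) vnorm (A i *m psi - (lam i)%:C *: psi) ^+ 2
               + vnorm (B *m psi - nu *: psi) ^+ 2)
       <= Num.sqrt ((m + m)%:R) * Num.sqrt (eps1 ^+ 2 + eps2)
     \/
     Num.sqrt (\sum_(i < d) vnorm (A i *m psi - (lam i)%:C *: psi) ^+ 2
               + vnorm (adjmx B *m psi - (nu^*)%C *: psi) ^+ 2)
       <= Num.sqrt ((m + m)%:R) * Num.sqrt (eps1 ^+ 2 + eps2)).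
Proof.
exact: (final_sec hGamma hA hn hm heps1 heps2 Hspec Hcomm).
Qed.
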